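(* Under the standing assumptions below, $(V,+)$ has no normal subgroups invariant under $\mathcal{A}=\langle A,A'\rangle$ other than $0$ and $V$.
   Context: Skew left brace $(B,+,\circ)$: groups $(B,+)$, $(B,\circ)$ with $a\circ(b+c)=a\circ b-a+a\circ c$; $\lambda_a(b)=-a+a\circ b$, $\sigma_a(b)=-a+b+a$, $a*b=-a+a\circ b-b$. Ideal: normal subgroup $I$ of $(B,+)$, $\lambda_a(I)\subseteq I$ for all $a$, normal in $(B,\circ)$. $I*J$ = additive subgroup generated by $\{i*j\}$; $B^{(2)}=B*B$, $B^{(3)}=B^{(2)}*B$. Standing assumptions: $B$ is a finite skew left brace and $X\subseteq B$ with $|X|\ge3$ and $\lambda_a(X)=X$, $\sigma_a(X)=X$ for all $a\in B$; $B$ is additively generated by $X$; the ideal $V$ generated by $\{x-y:x,y\in X\}$ is the smallest non-zero ideal of $B$; $B/V$ is a trivial skew left brace with cyclic additive group; the group $\{\sigma_a\lambda_b|_X:a,b\in V\}$ acts transitively on $X$; and $B^{(3)}=0$. Fix $x\in X$. Let $A\in\mathrm{Aut}(V,+)$ be $Av=x+v-x$ and $A'\in\mathrm{Aut}(V,+)$ the restriction of $\lambda_x$ to $V$; $\mathcal{A}=\langle A,A'\rangle\le\mathrm{Aut}(V)$. *)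

(* Defs.v *)
From mathcomp Require Import all_boot.
Set Implicit Arguments. Unset Strict Implicit. Unset Printing Implicit Defensive.

Record skew_brace (T : finType) := SkewBrace {
  badd : T -> T -> T; bopp : T -> T; bzero : T;
  bcirc : T -> T -> T; binv : T -> T; bone : T;
  baddA : associative badd;
  badd0l : left_id bzero badd; badd0r : right_id bzero badd;
  baddNl : forall a, badd (bopp a) a = bzero;
  baddNr : forall a, badd a (bopp a) = bzero;
  bcircA : associative bcirc;
  bcirc1l : left_id bone bcirc; bcirc1r : right_id bone bcirc;
  bcircVl : forall a, bcirc (binv a) a = bone;
  bcircVr : forall a, bcirc a (binv a) = bone;
  bcompat : forall a b c,
    bcirc a (badd b c) = badd (badd (bcirc a b) (bopp a)) (bcirc a c)
}.

Section Brace.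
Variables (T : finType) (B : skew_brace T).
Local Notation "a + b" := (badd B a b).
Local Notation "- a" := (bopp B a).
Local Notation "a - b" := (badd B a (bopp B b)).
Local Notation "0" := (bzero B).
Local Notation "a \bo b" := (bcirc B a b) (at level 40, left associativity).

Definition blam (a b : T) : T := - a + (a \bo b).
Definition bsig (a b : T) : T := - a + b + a.
Definition bstar (a b : T) : T := - a + (a \bo b) - b.
Fixpoint bnatmul (n : nat) (g : T) : T :=
  if n is m.+1 then g + bnatmul m g else 0.

Definition is_addsubgroup (S : {set T}) : bool :=
  [&& 0 \in S, [forall a in S, forall b in S, (a + b) \in S]
    & [forall a in S, (- a) \in S]].

Definition is_circsubgroup (S : {set T}) : bool :=
  [&& bone B \in S, [forall a in S, forall b in S, (a \bo b) \in S]
    & [forall a in S, binv B a \in S]].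

Definition is_ideal (I : {set T}) : bool :=
  [&& is_addsubgroup I,
      [forall a, forall i in I, (a + i - a) \in I],
      [forall a, forall i in I, blam a i \in I],
      is_circsubgroup I &
      [forall a, forall i in I, ((a \bo i) \bo binv B a) \in I]].

Definition add_gen (S : {set T}) : {set T} :=
  [set y | [forall H : {set T}, (is_addsubgroup H && (S \subset H)) ==> (y \in H)]].

Definition ideal_gen (S : {set T}) : {set T} :=
  [set y | [forall I : {set T}, (is_ideal I && (S \subset I)) ==> (y \in I)]].

Definition B2 : {set T} := add_gen [set bstar a b | a in [set: T], b in [set: T]].
Definition B3 : {set T} := add_gen [set bstar a b | a in B2, b in [set: T]].

Definition Vid (X : {set T}) : {set T} := ideal_gen [set a - b | a in X, b in X].

Definition standing (X : {set T}) : Prop :=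
  let V := Vid X in
  3 <= #|X| /\
      (forall a, [set blam a y | y in X] = X) /\
      (forall a, [set bsig a y | y in X] = X) /\
      add_gen X = setT /\
      (V != [set 0] /\ (forall I, is_ideal I -> I != [set 0] -> V \subset I))  /\
      (* B/V is a trivial skew brace: a o b = a + b modulo V *)
      (forall a b, - (a + b) + (a \bo b) \in V) /\
      (* B/V has cyclic additive group *)
      (exists g, forall b, exists n, - bnatmul n g + b \in V) /\
      (forall y z, y \in X -> z \in X ->
         exists a b, [/\ a \in V, b \in V & bsig a (blam b y) = z]) /\
      B3 = [set 0].

Definition autA (x v : T) : T := x + v - x.
Definition autAinv (x v : T) : T := - x + v + x.
Definition autA' (x v : T) : T := blam x v.
Definition autA'inv (x v : T) : T := blam (binv B x) v.

(* the group <A, A'>, as maps (relevant on V): all finite composites of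
   A, A^-1, A', A'^-1 *)
Inductive in_calA (x : T) : (T -> T) -> Prop :=
  | calA_id : in_calA x id
  | calA_A f : in_calA x f -> in_calA x (autA x \o f)
  | calA_Ainv f : in_calA x f -> in_calA x (autAinv x \o f)
  | calA_A' f : in_calA x f -> in_calA x (autA' x \o f)
  | calA_A'inv f : in_calA x f -> in_calA x (autA'inv x \o f).

Definition normal_sub_of (N V : {set T}) : Prop :=
  [/\ N \subset V, is_addsubgroup N &
      forall v n, v \in V -> n \in N -> v + n - v \in N].

Definition calA_invariant (x : T) (N : {set T}) : Prop :=
  forall f, in_calA x f -> forall n, n \in N -> f n \in N.

End Brace.

(* Main.v *)
Require Import Defs.
From mathcomp Require Import all_boot.
Set Implicit Arguments. Unset Strict Implicit. Unset Printing Implicit Defensive.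

Section Alg.
Variables (T : finType) (B : skew_brace T).
Local Notation "a + b" := (badd B a b).
Local Notation "- a" := (bopp B a).
Local Notation "a - b" := (badd B a (bopp B b)).
Local Notation "0" := (bzero B).
Local Notation "a \bo b" := (bcirc B a b) (at level 40, left associativity).
Local Notation lam := (blam B).
Local Notation star := (bstar B).
Local Notation inv := (binv B).

Lemma addA a b c : a + (b + c) = a + b + c. Proof. exact: baddA. Qed.
Lemma add0 a : 0 + a = a. Proof. exact: badd0l. Qed.
Lemma addr0 a : a + 0 = a. Proof. exact: badd0r. Qed.
Lemma addNa a : - a + a = 0. Proof. exact: baddNl. Qed.
Lemma addaN a : a - a = 0. Proof. exact: baddNr. Qed.
Lemma addKl a b : - a + (a + b) = b. Proof. by rewrite addA addNa add0. Qed.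
Lemma addNKl a b : a + (- a + b) = b. Proof. by rewrite addA addaN add0. Qed.
Lemma addKr a b : a + b - b = a. Proof. by rewrite -addA addaN addr0. Qed.
Lemma addNKr a b : a - b + b = a. Proof. by rewrite -addA addNa addr0. Qed.
Lemma add_inv a b : a + b = 0 -> b = - a.
Proof. by move=> h; rewrite -(addKl a b) h addr0. Qed.
Lemma oppK a : - - a = a.
Proof. by rewrite -(add_inv (addNa a)). Qed.
Lemma oppD a b : - (a + b) = - b + - a.
Proof. by apply/esym/add_inv; rewrite addA -(addA a) addaN addr0 addaN. Qed.
Lemma opp0 : - 0 = 0.
Proof. by rewrite -(add_inv (addr0 0)). Qed.
Lemma addIl a b c : a + b = a + c -> b = c.
Proof. by move=> h; rewrite -(addKl a b) h addKl. Qed.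

Lemma circ0r a : a \bo 0 = a.
Proof.
have := bcompat B a 0 0; rewrite add0 => h.
have h3 : a \bo 0 + 0 = a \bo 0 + (- a + a \bo 0) by rewrite addr0 addA -h.
by rewrite -(addNKl a (a \bo 0)) -(addIl h3) addr0.
Qed.
Lemma one0 : bone B = 0.
Proof. by rewrite -(circ0r (bone B)) bcirc1l. Qed.
Lemma circ_lam a b : a \bo b = a + lam a b.
Proof. by rewrite /blam addNKl. Qed.
Lemma lamD a b c : lam a (b + c) = lam a b + lam a c.
Proof. by rewrite /blam bcompat !addA. Qed.
Lemma lam0 a : lam a 0 = 0.
Proof. by rewrite /blam circ0r addNa. Qed.
Lemma lamN a b : lam a (- b) = - lam a b.
Proof. apply: add_inv; by rewrite -lamD addaN lam0. Qed.
Lemma lamM a b c : lam (a \bo b) c = lam a (lam b c).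
Proof.
rewrite [lam b c]/blam lamD lamN /blam oppD oppK bcircA.
by rewrite -addA addNKl.
Qed.
Lemma lam1 c : lam (bone B) c = c.
Proof. by rewrite /blam bcirc1l one0 opp0 add0. Qed.
Lemma lamK a c : lam (inv a) (lam a c) = c.
Proof. by rewrite -lamM bcircVl lam1. Qed.
Lemma lam_inj a : injective (lam a).
Proof. exact: can_inj (lamK a). Qed.
Lemma lam_star a b : lam a b = star a b + b.
Proof. by rewrite /bstar /blam addNKr. Qed.
Lemma starD a b c : star a (b + c) = star a b + (b + star a c - b).
Proof. by rewrite /bstar bcompat oppD !addA addNKr. Qed.
Lemma circ_sub a c : a \bo c - a = a + lam a c - a.
Proof. by rewrite circ_lam. Qed.
Lemma conj_circ a y :
  a \bo y \bo inv a = (a + lam a y - a) + (a + lam a (star y (inv a)) - a).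
Proof.
rewrite -bcircA (circ_lam y) (lam_star y) bcompat bcompat bcircVr one0 addr0.
by rewrite !circ_sub addA.
Qed.

Lemma addsubP (S : {set T}) : reflect [/\ 0 \in S, (forall a b, a \in S -> b \in S -> a + b \in S)
  & (forall a, a \in S -> - a \in S)] (is_addsubgroup B S).
Proof.
apply: (iffP and3P) => [[h0 /forall_inP hD /forall_inP hN]|[h0 hD hN]].
  split=> // a b Ha Hb; exact: (forall_inP (hD a Ha)).
split=> //; apply/forall_inP=> a Ha; [apply/forall_inP=> b Hb; exact: hD | exact: hN].
Qed.

Lemma circsubP (S : {set T}) : reflect [/\ bone B \in S, (forall a b, a \in S -> b \in S -> a \bo b \in S)
  & (forall a, a \in S -> inv a \in S)] (is_circsubgroup B S).
Proof.
apply: (iffP and3P) => [[h0 /forall_inP hD /forall_inP hN]|[h0 hD hN]].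
  split=> // a b Ha Hb; exact: (forall_inP (hD a Ha)).
split=> //; apply/forall_inP=> a Ha; [apply/forall_inP=> b Hb; exact: hD | exact: hN].
Qed.

Lemma mem_add_gen (S : {set T}) y : reflect (forall H, is_addsubgroup B H -> S \subset H -> y \in H)
  (y \in add_gen B S).
Proof.
rewrite inE; apply: (iffP forallP) => h H.
  by move=> h1 h2; move/implyP: (h H); apply; rewrite h1.
by apply/implyP=> /andP [h1 h2]; apply: h.
Qed.

Lemma add_gen_sub (S : {set T}) : S \subset add_gen B S.
Proof. by apply/subsetP=> y Hy; apply/mem_add_gen=> H _ /subsetP; apply. Qed.

Lemma add_gen_min (S H : {set T}) : is_addsubgroup B H -> S \subset H -> add_gen B S \subset H.
Proof. by move=> h1 h2; apply/subsetP=> y /mem_add_gen; apply. Qed.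

Lemma add_gen_grp (S : {set T}) : is_addsubgroup B (add_gen B S).
Proof.
apply/addsubP; split.
- by apply/mem_add_gen=> H /addsubP [].
- move=> a b /mem_add_gen ha /mem_add_gen hb; apply/mem_add_gen=> H hH hS.
  by case/addsubP: (hH) => _ hD _; apply: hD; [apply: ha|apply: hb].
- move=> a /mem_add_gen ha; apply/mem_add_gen=> H hH hS.
  by case/addsubP: (hH) => _ _ hN; apply: hN; apply: ha.
Qed.

Definition idealProp (I : {set T}) := [/\ is_addsubgroup B I,
  (forall a i, i \in I -> a + i - a \in I),
  (forall a i, i \in I -> lam a i \in I),
  is_circsubgroup B I &
  (forall a i, i \in I -> a \bo i \bo inv a \in I)].

Lemma idealP (I : {set T}) : reflect (idealProp I) (is_ideal B I).
Proof.
apply: (iffP and5P) => [[h1 /forallP h2 /forallP h3 h4 /forallP h5]|[h1 h2 h3 h4 h5]].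
  split=> // a i Hi; [exact: (forall_inP (h2 a)) | exact: (forall_inP (h3 a))
     | exact: (forall_inP (h5 a))].
split=> //; apply/forallP=> a; apply/forall_inP=> i Hi; by [apply: h2|apply: h3|apply: h5].
Qed.

Lemma mem_ideal_gen (S : {set T}) y : reflect (forall I, is_ideal B I -> S \subset I -> y \in I)
  (y \in ideal_gen B S).
Proof.
rewrite inE; apply: (iffP forallP) => h H.
  by move=> h1 h2; move/implyP: (h H); apply; rewrite h1.
by apply/implyP=> /andP [h1 h2]; apply: h.
Qed.

Lemma ideal_gen_sub (S : {set T}) : S \subset ideal_gen B S.
Proof. by apply/subsetP=> y Hy; apply/mem_ideal_gen=> H _ /subsetP; apply. Qed.

Lemma ideal_gen_ideal (S : {set T}) : is_ideal B (ideal_gen B S).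
Proof.
apply/idealP; split.
- apply/addsubP; split.
  + by apply/mem_ideal_gen=> I /idealP [/addsubP [] ].
  + move=> a b /mem_ideal_gen ha /mem_ideal_gen hb; apply/mem_ideal_gen=> I hI hS.
    case/idealP: (hI) => /addsubP [_ hD _] _ _ _ _; apply: hD; [exact: ha|exact: hb].
  + move=> a /mem_ideal_gen ha; apply/mem_ideal_gen=> I hI hS.
    case/idealP: (hI) => /addsubP [_ _ hN] _ _ _ _; apply: hN; exact: ha.
- move=> a i /mem_ideal_gen ha; apply/mem_ideal_gen=> I hI hS.
  case/idealP: (hI) => _ h _ _ _; apply: h; exact: ha.
- move=> a i /mem_ideal_gen ha; apply/mem_ideal_gen=> I hI hS.
  case/idealP: (hI) => _ _ h _ _; apply: h; exact: ha.
- apply/circsubP; split.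
  + by apply/mem_ideal_gen=> I /idealP [_ _ _ /circsubP [] ].
  + move=> a b /mem_ideal_gen ha /mem_ideal_gen hb; apply/mem_ideal_gen=> I hI hS.
    case/idealP: (hI) => _ _ _ /circsubP [_ hD _] _; apply: hD; [exact: ha|exact: hb].
  + move=> a /mem_ideal_gen ha; apply/mem_ideal_gen=> I hI hS.
    case/idealP: (hI) => _ _ _ /circsubP [_ _ hN] _; apply: hN; exact: ha.
- move=> a i /mem_ideal_gen ha; apply/mem_ideal_gen=> I hI hS.
  case/idealP: (hI) => _ _ _ _ h; apply: h; exact: ha.
Qed.

Lemma inj_onto (f : T -> T) (N : {set T}) : injective f ->
  (forall n, n \in N -> f n \in N) -> forall n, n \in N -> exists2 m, m \in N & f m = n.
Proof.
move=> fi fN n Hn.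
have sub : f @: N \subset N by apply/subsetP=> y /imsetP [m Hm ->]; exact: fN.
have : f @: N = N by apply/eqP; rewrite eqEcard sub (card_imset _ fi) leqnn.
by move=> e; move: Hn; rewrite -{1}e => /imsetP [m Hm ->]; exists m.
Qed.


Lemma conjD a y z : a + (y + z) - a = (a + y - a) + (a + z - a).
Proof. by rewrite !addA addNKr. Qed.
Lemma conjN a y : a + - y - a = - (a + y - a).
Proof. by rewrite !oppD oppK addA. Qed.
Lemma conj0 a : a + 0 - a = 0.
Proof. by rewrite addr0 addaN. Qed.

Lemma ideal_of (I : {set T}) : is_addsubgroup B I ->
  (forall a i, i \in I -> a + i - a \in I) ->
  (forall a i, i \in I -> lam a i \in I) ->
  (forall i b, i \in I -> star i b \in I) -> is_ideal B I.
Proof.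
move=> hI hC hL hS; case/addsubP: (hI) => h0 hD hN.
apply/idealP; split=> //.
  apply/circsubP; split.
  - by rewrite one0.
  - by move=> a b Ha Hb; rewrite circ_lam; apply: hD => //; apply: hL.
  - move=> a Ha.
    have e : inv a + lam (inv a) a = 0 by rewrite -circ_lam bcircVl one0.
    by rewrite -(oppK (inv a)) -(add_inv e); apply: hN; apply: hL.
move=> a i Hi; rewrite conj_circ; apply: hD; apply: hC; apply: hL => //.
exact: hS.
Qed.

Lemma star_B2 a b : star a b \in B2 B.
Proof. by apply: (subsetP (add_gen_sub _)); apply/imset2P; exists a b. Qed.

Lemma B2_ideal : is_ideal B (B2 B).
Proof.
have G : is_addsubgroup B (B2 B) := add_gen_grp _.
case/addsubP: (G) => h0 hD hN.
apply: ideal_of => //.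
- pose H := [set y | (y \in B2 B) && [forall a, a + y - a \in B2 B]].
  have memH y : (y \in H) = (y \in B2 B) && [forall a, a + y - a \in B2 B].
    by rewrite /H !inE.
  have : B2 B \subset H.
    apply: add_gen_min.
      apply/addsubP; split.
      + by rewrite memH h0; apply/forallP=> a; rewrite conj0.
      + move=> y z; rewrite !memH => /andP [hy /forallP cy] /andP [hz /forallP cz].
        by rewrite hD //; apply/forallP=> a; rewrite conjD hD.
      + move=> y; rewrite !memH => /andP [hy /forallP cy].
        by rewrite hN //; apply/forallP=> a; rewrite conjN hN.
    apply/subsetP=> y /imset2P [b c _ _ ->]; rewrite memH star_B2 /=.
    apply/forallP=> a.
    have e : a + star b c - a = - star b a + star b (a + c).
      by rewrite starD addKl.
    by rewrite e; apply: hD; [apply: hN|]; apply: star_B2.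
  by move=> /subsetP sub a i /sub; rewrite memH => /andP [_ /forallP].
- by move=> a i Hi; rewrite lam_star; apply: hD => //; apply: star_B2.
- by move=> i b _; exact: star_B2.
Qed.


Lemma conjM a b n : (a + b) + n - (a + b) = a + (b + n - b) - a.
Proof. by rewrite oppD !addA. Qed.
Lemma conjK a m : - a + (a + m - a) - - a = m.
Proof. by rewrite oppK !addA addNa add0 addNKr. Qed.

Lemma main (X : {set T}) (x : T) :
  standing B X -> x \in X ->
  forall N : {set T},
    normal_sub_of B N (Vid B X) -> calA_invariant B x N ->
    N = [set bzero B] \/ N = Vid B X.
Proof.
move=> st xX N [NV NG Nnorm] NA.
case: st => _ [Hlam [Hsig [Hgen [[HV0 Hmin] [Htriv [Hcyc [Htrans HB3]]]]]]].
set V := Vid B X in Hmin Htriv Htrans Nnorm NV *.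
have VI : is_ideal B V := ideal_gen_ideal _.
case/idealP: (VI) => /addsubP [V0 VD VN] VC VL _ _.
have diffV y z : y \in X -> z \in X -> y - z \in V.
  by move=> hy hz; apply: (subsetP (ideal_gen_sub _)); apply/imset2P; exists y z.
have lamV : forall v, v \in V -> forall b, v \bo b = v + b.
  have fin v b : star v b = 0 -> v \bo b = v + b.
    by rewrite /bstar => e; rewrite -(addNKl v (v \bo b)) -(addNKr (- v + v \bo b) b) e add0.
  case: (boolP (B2 B == [set 0])) => [/eqP h|hne].
    by move=> v _ b; apply: fin; have := star_B2 v b; rewrite h inE => /eqP.
  move=> v hv b; apply: fin.
  have sub : V \subset B2 B := Hmin _ B2_ideal hne.
  have : star v b \in B3 B.
    apply: (subsetP (add_gen_sub _)); apply/imset2P; exists v b => //.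
    exact: (subsetP sub).
  by rewrite HB3 inE => /eqP.
have lamVid v : v \in V -> forall n, lam v n = n.
  by move=> hv n; rewrite /blam lamV // addKl.
have NsubV : forall n, n \in N -> n \in V by apply/subsetP.
case/addsubP: (NG) => N0 ND NN.
pose G := [set a | [forall n in N, a + n - a \in N]].
have memG a : (a \in G) = [forall n in N, a + n - a \in N] by rewrite inE.
have Gall : forall a n, n \in N -> a + n - a \in N.
  have : add_gen B X \subset G.
    apply: add_gen_min.
      apply/addsubP; split.
      - by rewrite memG; apply/forall_inP=> n hn; rewrite add0 opp0 addr0.
      - move=> a b; rewrite !memG => /forall_inP ha /forall_inP hb.
        by apply/forall_inP=> n hn; rewrite conjM; apply: ha; apply: hb.
      - move=> a; rewrite !memG => /forall_inP ha; apply/forall_inP=> n hn.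
        have fi : injective (fun m => a + m - a).
          by move=> m m' e; rewrite -(conjK a m) e conjK.
        have [m hm <-] := inj_onto fi ha hn.
        by rewrite conjK.
    apply/subsetP=> y hy; rewrite memG; apply/forall_inP=> n hn.
    rewrite -(addNKr y x) conjM; apply: Nnorm; first exact: diffV.
    exact: (NA _ (calA_A (calA_id _ _)) n hn).
  rewrite Hgen => /subsetP sub a n hn.
  by have := sub a (in_setT a); rewrite memG => /forall_inP; apply.
pose L := [set a | [forall n in N, lam a n \in N]].
have memL a : (a \in L) = [forall n in N, lam a n \in N] by rewrite inE.
have VL' v : v \in V -> v \in L.
  by move=> hv; rewrite memL; apply/forall_inP=> n hn; rewrite lamVid.
have LM a b : a \in L -> b \in L -> a \bo b \in L.
  rewrite !memL => /forall_inP ha /forall_inP hb.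
  by apply/forall_inP=> n hn; rewrite lamM; apply: ha; apply: hb.
have LV a : a \in L -> inv a \in L.
  rewrite !memL => /forall_inP ha; apply/forall_inP=> n hn.
  have [m hm <-] := inj_onto (@lam_inj a) ha hn.
  by rewrite lamK.
have aiV a : - (a + inv a) \in V.
  by have := Htriv a (inv a); rewrite bcircVr one0 addr0.
have iaV a : inv a + a \in V.
  by have := VN _ (Htriv (inv a) a); rewrite bcircVl one0 addr0 oppK.
have Lcos a v : a \in L -> v \in V -> a + v \in L.
  move=> ha hv.
  pose c := inv a \bo (a + v).
  have cV : c \in V.
    have h1 : inv a + (a + v) \in V by rewrite addA; apply: VD.
    by rewrite -(addNKl (inv a + (a + v)) c); apply: VD => //; apply: Htriv.
  have e : a \bo c = a + v by rewrite /c bcircA bcircVr bcirc1l.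
  rewrite -e memL; apply/forall_inP=> n hn; rewrite lamM (lamVid c cV).
  by move: ha; rewrite memL => /forall_inP; apply.
have Lall : forall a n, n \in N -> lam a n \in N.
  have : add_gen B X \subset L.
    apply: add_gen_min.
      apply/addsubP; split.
      - exact: VL'.
      - move=> a b ha hb.
        have -> : a + b = a \bo b + (- (a \bo b) + (a + b)) by rewrite addNKl.
        apply: Lcos; first exact: LM.
        by have := VN _ (Htriv a b); rewrite oppD oppK.
      - move=> a ha.
        have -> : - a = inv a + (- inv a + - a) by rewrite addNKl.
        by apply: Lcos; [exact: LV | rewrite -oppD].
    apply/subsetP=> y hy.
    have -> : y = x + (- x + y) by rewrite addNKl.
    apply: Lcos.
      by rewrite memL; apply/forall_inP=> n hn; exact: (NA _ (calA_A' (calA_id _ _)) n hn).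
    have := VC (- x) (y - x) (diffV y x hy xX).
    by rewrite oppK !addA addNKr.
  rewrite Hgen => /subsetP sub a n hn.
  by have := sub a (in_setT a); rewrite memL => /forall_inP; apply.
have NI : is_ideal B N.
  apply: ideal_of => // i b hi.
  by rewrite /bstar lamV ?NsubV // addKl addaN.
case: (boolP (N == [set 0])) => [/eqP -> | hne]; first by left.
right; apply/eqP; rewrite eqEsubset NV; exact: Hmin.
Qed.

End Alg.

Theorem lemma5p4 (T : finType) (B : skew_brace T) (X : {set T}) (x : T) :
  standing B X -> x \in X ->
  forall N : {set T},
    normal_sub_of B N (Vid B X) -> calA_invariant B x N ->
    N = [set bzero B] \/ N = Vid B X.
Proof. exact: main. Qed.
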